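(* Let $U$ be in class $\mathcal{K}^{+}$ on $[y_1,y_2]$ and $\beta\in(\min U'',\max U'')$. If $\alpha>0$ and $\phi$ is a solution of $-\phi''+\alpha^2\phi-\frac{\beta-U''}{U-c}\phi=0$ on $(y_1,y_2)$, $\phi(y_1)=\phi(y_2)=0$, with $c=c_r+ic_i$, $c_i>0$, then $$\int_{y_1}^{y_2}(|\phi'|^2+\alpha^2|\phi|^2)\,dy\le\int_{y_1}^{y_2}K_\beta|\phi|^2\,dy,$$ $$\int_{y_1}^{y_2}(|\phi''|^2+2\alpha^2|\phi'|^2+\alpha^4|\phi|^2)\,dy\le\|K_\beta\|_{L^\infty}\int_{y_1}^{y_2}K_\beta|\phi|^2\,dy.$$
   Context: Class $\mathcal{K}^+$: $U\in C^{3}([y_1,y_2])$ is not constant, and for each $\beta\in\mathrm{Ran}(U'')$ there exists $U_\beta\in\mathrm{Ran}(U)$ such that $K_\beta(y)=\frac{\beta-U''(y)}{U(y)-U_\beta}$ is positive and bounded on $[y_1,y_2]$. *)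

(* Defs.v *)
From Stdlib Require Import Reals.
From Coquelicot Require Import Coquelicot.
Open Scope R_scope.

(* U is C^3 on [y1,y2]: we ask for (two-sided) derivatives up to order 3
   on an open neighbourhood of [y1,y2], with continuous third derivative. *)
Definition C3_on (U : R -> R) (y1 y2 : R) : Prop :=
  exists eps : R, 0 < eps /\
    forall x : R, y1 - eps < x < y2 + eps ->
      (forall k : nat, (k <= 3)%nat -> ex_derive_n U k x) /\
      continuous (Derive_n U 3) x.

Definition Ran (f : R -> R) (y1 y2 : R) (v : R) : Prop :=
  exists y : R, y1 <= y <= y2 /\ f y = v.

(* K_beta(y) = (beta - U''(y)) / (U(y) - U_beta)  (literal quotient;
   Rocq's convention x / 0 = 0 only matters on the zero set of U - U_beta). *)
Definition Kbeta (U : R -> R) (beta Ub : R) (y : R) : R :=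
  (beta - Derive_n U 2 y) / (U y - Ub).

(* "K_beta is positive and bounded on [y1,y2]": the quotient
   (beta - U'')/(U - U_beta) defines (after filling in the 0/0 points)
   a function K on [y1,y2] which is positive and bounded. *)
Definition Kbeta_pos_bdd (U : R -> R) (y1 y2 beta Ub : R) : Prop :=
  exists (K : R -> R) (M : R),
    forall y : R, y1 <= y <= y2 ->
      K y * (U y - Ub) = beta - Derive_n U 2 y /\ 0 < K y /\ K y <= M.

Definition classKplus (U : R -> R) (y1 y2 : R) : Prop :=
  C3_on U y1 y2 /\
  (exists x y : R, y1 <= x <= y2 /\ y1 <= y <= y2 /\ U x <> U y) /\
  (forall beta : R, Ran (Derive_n U 2) y1 y2 beta ->
     exists Ub : R, Ran U y1 y2 Ub /\ Kbeta_pos_bdd U y1 y2 beta Ub).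

Definition Linf_on (f : R -> R) (y1 y2 : R) : R :=
  real (Lub_Rbar (fun v : R => exists y : R, y1 <= y <= y2 /\ v = Rabs (f y))).

(* Main.v *)
Require Import Defs.
From Stdlib Require Import Reals Lra Psatz Classical.
From Coquelicot Require Import Coquelicot.
Open Scope R_scope.

Definition clp (a b y : R) : R := Rmax a (Rmin b y).

Lemma clp_in a b y : a <= b -> a <= clp a b y <= b.
Proof. intros. unfold clp, Rmax, Rmin. repeat destruct Rle_dec; lra. Qed.

Lemma clp_id a b y : a <= y <= b -> clp a b y = y.
Proof. intros. unfold clp, Rmax, Rmin. repeat destruct Rle_dec; lra. Qed.

Lemma clp_lip a b y z : a <= b -> Rabs (clp a b z - clp a b y) <= Rabs (z - y).
Proof. intros. unfold clp, Rmax, Rmin. repeat destruct Rle_dec;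
  unfold Rabs; repeat destruct Rcase_abs; lra. Qed.

Lemma cont_of_eps (f : R -> R) x :
  (forall eps, 0 < eps -> exists del, 0 < del /\ forall z, Rabs (z - x) < del -> Rabs (f z - f x) < eps) ->
  continuity_pt f x.
Proof.
  intros H eps Heps. destruct (H eps Heps) as [del [Hd H']].
  exists del. split. exact Hd. intros z [_ Hz]. apply H'. exact Hz.
Qed.

Lemma eps_of_cont (f : R -> R) x : continuity_pt f x ->
  forall eps, 0 < eps -> exists del, 0 < del /\ forall z, Rabs (z - x) < del -> Rabs (f z - f x) < eps.
Proof.
  intros H eps Heps. destruct (H eps Heps) as [del [Hd H']].
  exists del. split. exact Hd. intros z Hz.
  destruct (Req_dec z x) as [->|Hne].
  - unfold Rminus; rewrite Rplus_opp_r, Rabs_R0; lra.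
  - apply H'. split. split. exact I. auto. exact Hz.
Qed.

Lemma clp_cont a b g : a <= b ->
  (forall y, a<=y<=b -> forall eps, 0<eps -> exists del, 0<del /\
     forall z, a<=z<=b -> Rabs (z-y) < del -> Rabs (g z - g y) < eps) ->
  forall x, continuity_pt (fun z => g (clp a b z)) x.
Proof.
  intros Hab H x. apply cont_of_eps. intros eps He.
  destruct (H (clp a b x) (clp_in a b x Hab) eps He) as [del [Hd H']].
  exists del; split; auto. intros z Hz. apply H'. apply clp_in; auto.
  eapply Rle_lt_trans; [apply clp_lip; auto| exact Hz].
Qed.

Lemma deriv_cont f x l : is_derive f x l -> continuity_pt f x.
Proof.
  intros H. apply continuity_pt_filterlim. apply (ex_derive_continuous f x).
  exists l; exact H.
Qed.

Lemma is_derive_multR (f g : R -> R) x df dg : is_derive f x df -> is_derive g x dg ->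
  is_derive (fun t => f t * g t) x (df * g x + f x * dg).
Proof.
  intros H1 H2. apply (is_derive_mult f g x df dg H1 H2). intros; apply Rmult_comm.
Qed.

Lemma is_derive_minusR (f g : R -> R) x df dg : is_derive f x df -> is_derive g x dg ->
  is_derive (fun t => f t - g t) x (df - dg).
Proof. intros H1 H2. apply (is_derive_minus f g x df dg H1 H2). Qed.

Lemma is_derive_plusR (f g : R -> R) x df dg : is_derive f x df -> is_derive g x dg ->
  is_derive (fun t => f t + g t) x (df + dg).
Proof. intros H1 H2. apply (is_derive_plus f g x df dg H1 H2). Qed.

Lemma is_derive_scalR (f : R -> R) k x df : is_derive f x df ->
  is_derive (fun t => k * f t) x (k * df).
Proof. intros H1. apply (is_derive_scal f x k df H1). Qed.

Lemma is_derive_lin k x : is_derive (fun z => k * z) x k.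
Proof.
  pose proof (is_derive_scalR (fun z => z) k x 1 (is_derive_id x)) as H.
  rewrite Rmult_1_r in H. exact H.
Qed.

Lemma taylor2 (f f1 f2 : R -> R) t y K :
  (forall z, Rmin t y <= z <= Rmax t y -> is_derive f z (f1 z) /\ is_derive f1 z (f2 z)) ->
  (forall z, Rmin t y <= z <= Rmax t y -> Rabs (f2 z) <= K) ->
  Rabs (f y - f t - f1 t * (y - t)) <= K * (y - t)^2.
Proof.
  intros Hd HK.
  assert (Hty : Rmin t y <= t <= Rmax t y) by (unfold Rmin, Rmax; destruct Rle_dec; lra).
  assert (K0 : 0 <= K) by (eapply Rle_trans; [apply Rabs_pos| apply (HK t Hty)]).
  destruct (MVT_gen (fun z => f z - f1 t * z) t y (fun z => f1 z - f1 t)) as [c [Hc Hc']].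
  { intros z Hz. apply is_derive_minusR. apply Hd; lra.
    apply is_derive_lin. }
  { intros z Hz. apply (deriv_cont _ _ (f1 z - f1 t)).
    apply is_derive_minusR. apply Hd; lra.
    apply is_derive_lin. }
  assert (Hsub : forall z, Rmin t c <= z <= Rmax t c -> Rmin t y <= z <= Rmax t y).
  { intros z. revert Hc. unfold Rmin, Rmax. repeat destruct Rle_dec; lra. }
  destruct (MVT_gen f1 t c f2) as [d [Hd1 Hd2]].
  { intros z Hz. apply Hd. apply Hsub. lra. }
  { intros z Hz. apply (deriv_cont _ _ (f2 z)). apply Hd. apply Hsub. lra. }
  assert (E : f y - f t - f1 t * (y - t) = f2 d * (c - t) * (y - t)).
  { simpl in Hc'. rewrite Hd2 in Hc'. lra. }
  rewrite E, !Rabs_mult.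
  assert (Hct : Rabs (c - t) <= Rabs (y - t)).
  { revert Hc. unfold Rmin, Rmax. destruct Rle_dec; intros; unfold Rabs;
    repeat destruct Rcase_abs; lra. }
  assert (H2 : Rabs (f2 d) <= K) by (apply HK; apply Hsub; lra).
  replace ((y - t)^2) with (Rabs (y - t) * Rabs (y - t)).
  2:{ unfold Rabs; destruct Rcase_abs; ring. }
  rewrite <- Rmult_assoc.
  apply Rmult_le_compat_r. apply Rabs_pos.
  apply Rmult_le_compat; auto using Rabs_pos.
Qed.

Lemma const_open (g : R -> R) a b m : a < m < b ->
  (forall z, a < z < b -> is_derive g z 0) -> forall y, a < y < b -> g y = g m.
Proof.
  intros Hm Hd y Hy.
  destruct (MVT_gen g m y (fun _ => 0)) as [c [_ Hc]].
  { intros z Hz. apply Hd. revert Hz; unfold Rmin, Rmax; destruct Rle_dec; lra. }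
  { intros z Hz. apply (deriv_cont _ _ 0). apply Hd. revert Hz; unfold Rmin, Rmax; destruct Rle_dec; lra. }
  lra.
Qed.

Lemma endpt_l (f g : R -> R) a b : a < b -> continuity_pt f a ->
  (forall eps, 0<eps -> exists del, 0<del /\ forall z, a<=z<=b -> Rabs (z-a) < del -> Rabs (g z - g a) < eps) ->
  (forall z, a < z < b -> f z = g z) -> f a = g a.
Proof.
  intros Hab Hf Hg He.
  destruct (Req_dec (f a) (g a)) as [E|Hne]; auto. exfalso.
  set (e := Rabs (f a - g a)).
  assert (He0 : 0 < e) by (apply Rabs_pos_lt; lra).
  destruct (eps_of_cont f a Hf (e/2)) as [d1 [Hd1 H1]]. lra.
  destruct (Hg (e/2)) as [d2 [Hd2 H2]]. lra.
  set (z := a + Rmin (Rmin d1 d2) (b - a) / 2).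
  assert (Hm1 : Rmin (Rmin d1 d2) (b - a) <= d1) by (unfold Rmin; repeat destruct Rle_dec; lra).
  assert (Hm2 : Rmin (Rmin d1 d2) (b - a) <= d2) by (unfold Rmin; repeat destruct Rle_dec; lra).
  assert (Hm3 : Rmin (Rmin d1 d2) (b - a) <= b - a) by (unfold Rmin; repeat destruct Rle_dec; lra).
  assert (Hm4 : 0 < Rmin (Rmin d1 d2) (b - a)) by (unfold Rmin; repeat destruct Rle_dec; lra).
  assert (Hza : Rabs (z - a) < Rmin (Rmin d1 d2) (b - a)).
  { unfold z. rewrite Rabs_right; lra. }
  specialize (H1 z ltac:(lra)). specialize (H2 z ltac:(unfold z; lra) ltac:(lra)).
  rewrite He in H1 by (unfold z; lra).
  unfold e in *. revert H1 H2. unfold Rabs; repeat destruct Rcase_abs; lra.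
Qed.

Lemma endpt_r (f g : R -> R) a b : a < b -> continuity_pt f b ->
  (forall eps, 0<eps -> exists del, 0<del /\ forall z, a<=z<=b -> Rabs (z-b) < del -> Rabs (g z - g b) < eps) ->
  (forall z, a < z < b -> f z = g z) -> f b = g b.
Proof.
  intros Hab Hf Hg He.
  destruct (Req_dec (f b) (g b)) as [E|Hne]; auto. exfalso.
  set (e := Rabs (f b - g b)).
  assert (He0 : 0 < e) by (apply Rabs_pos_lt; lra).
  destruct (eps_of_cont f b Hf (e/2)) as [d1 [Hd1 H1]]. lra.
  destruct (Hg (e/2)) as [d2 [Hd2 H2]]. lra.
  set (z := b - Rmin (Rmin d1 d2) (b - a) / 2).
  assert (Hm1 : Rmin (Rmin d1 d2) (b - a) <= d1) by (unfold Rmin; repeat destruct Rle_dec; lra).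
  assert (Hm2 : Rmin (Rmin d1 d2) (b - a) <= d2) by (unfold Rmin; repeat destruct Rle_dec; lra).
  assert (Hm3 : Rmin (Rmin d1 d2) (b - a) <= b - a) by (unfold Rmin; repeat destruct Rle_dec; lra).
  assert (Hm4 : 0 < Rmin (Rmin d1 d2) (b - a)) by (unfold Rmin; repeat destruct Rle_dec; lra).
  assert (Hza : Rabs (z - b) < Rmin (Rmin d1 d2) (b - a)).
  { unfold z. rewrite Rabs_left; lra. }
  specialize (H1 z ltac:(lra)). specialize (H2 z ltac:(unfold z; lra) ltac:(lra)).
  rewrite He in H1 by (unfold z; lra).
  unfold e in *. revert H1 H2. unfold Rabs; repeat destruct Rcase_abs; lra.
Qed.

Definition clamp01 (t : R) := (Rabs t - Rabs (t - 1) + 1) / 2.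

Lemma clamp01_lip s t : Rabs (clamp01 s - clamp01 t) <= Rabs (s - t).
Proof. unfold clamp01, Rabs; repeat destruct Rcase_abs; lra. Qed.
Lemma clamp01_bnd t : 0 <= clamp01 t <= 1.
Proof. unfold clamp01, Rabs; repeat destruct Rcase_abs; lra. Qed.
Lemma clamp01_neg t : t <= 0 -> clamp01 t = 0.
Proof. unfold clamp01, Rabs; repeat destruct Rcase_abs; lra. Qed.
Lemma clamp01_one t : 1 <= t -> clamp01 t = 1.
Proof. unfold clamp01, Rabs; repeat destruct Rcase_abs; lra. Qed.

Lemma RI_point (F : R -> R) p q x B :
  p <= q -> (forall y, p <= y <= q -> Rabs (F y) <= B) ->
  (forall y, p <= y <= q -> y <> x -> continuity_pt F y) ->
  Riemann_integrable F p q.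
Proof.
  intros Hpq HB Hc eps.
  set (B' := Rabs B + 1).
  assert (HB' : 0 < B') by (unfold B'; pose proof (Rabs_pos B); lra).
  set (del := eps / (8 * B')).
  assert (Hdel : 0 < del) by (unfold del; apply Rdiv_lt_0_compat; [apply cond_pos| lra]).
  set (chi := fun y => clamp01 ((Rabs (y - x) - del) / del)).
  set (h := fun y => F y * chi y).
  assert (chi_lip : forall y z, Rabs (chi z - chi y) <= Rabs (z - y) / del).
  { intros y z. unfold chi. eapply Rle_trans. apply clamp01_lip.
    replace ((Rabs (z - x) - del) / del - (Rabs (y - x) - del) / del)
      with ((Rabs (z - x) - Rabs (y - x)) / del) by (field; lra).
    unfold Rdiv. rewrite Rabs_mult, (Rabs_right (/ del)).
    2: { apply Rle_ge, Rlt_le, Rinv_0_lt_compat; lra. }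
    apply Rmult_le_compat_r. apply Rlt_le, Rinv_0_lt_compat; lra.
    replace (z - y) with ((z - x) - (y - x)) by ring. apply Rabs_triang_inv2. }
  assert (chi_cont : forall y, continuity_pt chi y).
  { intros y. apply cont_of_eps. intros e He. exists (e * del). split. nra.
    intros z Hz. eapply Rle_lt_trans. apply chi_lip.
    apply (Rmult_lt_reg_r del). lra. unfold Rdiv. rewrite Rmult_assoc, Rinv_l; lra. }
  assert (h_cont : forall y, p <= y <= q -> continuity_pt h y).
  { intros y Hy. destruct (Req_dec y x) as [->|Hne].
    - assert (Hz0 : forall z, Rabs (z - x) <= del -> h z = 0).
      { intros z Hz. unfold h, chi. rewrite clamp01_neg. ring.
        apply (Rmult_le_reg_r del). lra. unfold Rdiv. rewrite Rmult_assoc, Rinv_l; lra. }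
      apply cont_of_eps. intros e He. exists del. split; auto. intros z Hz.
      rewrite !Hz0. unfold Rminus; rewrite Rplus_opp_r, Rabs_R0. lra.
      unfold Rminus; rewrite Rplus_opp_r, Rabs_R0. lra. lra.
    - unfold h. apply continuity_pt_mult. apply Hc; auto. apply chi_cont. }
  assert (He2 : 0 < eps / 2) by (pose proof (cond_pos eps); lra).
  destruct (@continuity_implies_RiemannInt h p q Hpq h_cont (mkposreal _ He2)) as [phi1 [psi1 [H1 H2]]].
  simpl in H2.
  set (c1 := clp p q (x - 2 * del)). set (c2 := clp p q (x + 2 * del)).
  set (E := fun y => if Rlt_dec (Rabs (y - x)) (2 * del) then B' else 0).
  assert (Hc1 : p <= c1 <= q) by (apply clp_in; auto). assert (Hc2 : p <= c2 <= q) by (apply clp_in; auto).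
  assert (Hc12 : c1 <= c2) by (unfold c1, c2, clp, Rmax, Rmin; repeat destruct Rle_dec; lra).
  assert (Hc21 : c2 - c1 <= 4 * del).
  { pose proof (clp_lip p q (x - 2 * del) (x + 2 * del) Hpq) as L. fold c1 c2 in L.
    revert L. unfold Rabs; repeat destruct Rcase_abs; lra. }
  assert (Had : adapted_couple E p q (p :: c1 :: c2 :: q :: nil) (0 :: B' :: 0 :: nil)).
  { unfold adapted_couple. split; [|split; [|split; [|split]]].
    - intros i Hi. simpl in Hi. destruct i as [|[|[|i]]]; simpl; lra || lia.
    - simpl. unfold Rmin; destruct Rle_dec; lra.
    - simpl. unfold Rmax; destruct Rle_dec; lra.
    - reflexivity.
    - intros i Hi. simpl in Hi. unfold constant_D_eq, open_interval.
      destruct i as [|[|[|i]]]; simpl; intros y Hy; unfold E.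
      + destruct Rlt_dec as [r|r]; auto. exfalso. revert r Hy. unfold c1, clp, Rmax, Rmin.
        repeat destruct Rle_dec; unfold Rabs; destruct Rcase_abs; lra.
      + destruct Rlt_dec as [r|r]; auto. exfalso. revert r Hy. unfold c1, c2, clp, Rmax, Rmin.
        repeat destruct Rle_dec; unfold Rabs; destruct Rcase_abs; lra.
      + destruct Rlt_dec as [r|r]; auto. exfalso. revert r Hy. unfold c2, clp, Rmax, Rmin.
        repeat destruct Rle_dec; unfold Rabs; destruct Rcase_abs; lra.
      + lia. }
  set (Es := mkStepFun (existT _ _ (existT _ _ Had) : IsStepFun E p q)).
  assert (HEs : 0 <= RiemannInt_SF Es <= 4 * del * B').
  { unfold RiemannInt_SF. destruct Rle_dec; [|lra]. simpl. nra. }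
  exists phi1. exists (mkStepFun (StepFun_P28 1 psi1 Es)). split.
  - intros t Ht. simpl.
    assert (Ht' : p <= t <= q) by (revert Ht; unfold Rmin, Rmax; destruct Rle_dec; lra).
    specialize (H1 t Ht). fold (h t) in H1 |- *.
    replace (F t - phi1 t) with ((F t - h t) + (h t - phi1 t)) by ring.
    eapply Rle_trans. apply Rabs_triang.
    enough (Rabs (F t - h t) <= E t) by lra.
    unfold h. replace (F t - F t * chi t) with (F t * (1 - chi t)) by ring.
    rewrite Rabs_mult. pose proof (clamp01_bnd ((Rabs (t - x) - del) / del)) as Hb. fold (chi t) in Hb.
    unfold E. destruct Rlt_dec as [r|r].
    + rewrite (Rabs_right (1 - chi t)) by lra. specialize (HB t Ht').
      assert (B <= B') by (unfold B'; pose proof (Rle_abs B); lra).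
      pose proof (Rabs_pos (F t)). nra.
    + unfold chi. rewrite clamp01_one. rewrite Rminus_diag, Rabs_R0. lra.
      apply (Rmult_le_reg_r del). lra. unfold Rdiv. rewrite Rmult_assoc, Rinv_l; lra.
  - rewrite StepFun_P30. eapply Rle_lt_trans. apply Rabs_triang.
    rewrite Rmult_1_l. rewrite (Rabs_right (RiemannInt_SF Es)) by lra.
    assert (4 * del * B' = eps / 2) by (unfold del; field; lra). lra.
Qed.

Lemma RI_loc_glob (F : R -> R) a b : a <= b ->
  (forall x, a <= x <= b -> exists del, 0 < del /\ forall p q, a <= p <= x -> x <= q <= b -> q - p < del -> ex_RInt F p q) ->
  ex_RInt F a b.
Proof.
  intros Hab Hloc.
  set (E := fun t => a <= t <= b /\ ex_RInt F a t).
  assert (HbE : bound E) by (exists b; intros t [Ht _]; lra).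
  assert (HaE : exists t, E t) by (exists a; split; [lra| apply ex_RInt_point]).
  destruct (completeness E HbE HaE) as [m [Hub Hlub]].
  assert (Ham : a <= m) by (apply Hub; split; [lra| apply ex_RInt_point]).
  assert (Hmb : m <= b) by (apply Hlub; intros t [Ht _]; lra).
  destruct (Hloc m (conj Ham Hmb)) as [del [Hdel Hd]].
  destruct (classic (exists t, E t /\ m - del/2 < t)) as [[t [[Ht Hti] Htm]]|Hno].
  2:{ exfalso. assert (m <= m - del/2); [|lra]. apply Hlub. intros t Et.
      destruct (Rle_dec t (m - del/2)); auto. exfalso. apply Hno. exists t. split; auto; lra. }
  assert (Htm' : t <= m) by (apply Hub; split; auto).
  set (q := Rmin b (m + del/4)).
  assert (Hq : m <= q <= b) by (unfold q, Rmin; destruct Rle_dec; lra).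
  assert (Hint : ex_RInt F t q) by (apply Hd; unfold q, Rmin in *; try destruct Rle_dec; lra).
  assert (Haq : ex_RInt F a q) by (apply ex_RInt_Chasles with t; auto).
  assert (Hqm : q <= m) by (apply Hub; split; auto; lra).
  unfold q, Rmin in Haq, Hqm. destruct Rle_dec; auto. lra.
Qed.

Lemma is_derive_eq (f : R -> R) (x l l' : R) : is_derive f x l -> l = l' -> is_derive f x l'.
Proof. intros H ->; exact H. Qed.

Lemma is_derive_constR (k x : R) : is_derive (fun _ => k) x 0.
Proof. apply (is_derive_const k x). Qed.
Lemma is_derive_idR (x : R) : is_derive (fun z => z) x 1.
Proof. apply (@is_derive_id R_AbsRing x). Qed.

Lemma between_sub a b t y z : a <= t <= b -> a <= y <= b -> Rmin t y <= z <= Rmax t y -> a <= z <= b.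
Proof. unfold Rmin, Rmax; destruct Rle_dec; lra. Qed.

Lemma between_abs t y z : Rmin t y <= z <= Rmax t y -> Rabs (z - t) <= Rabs (y - t).
Proof. unfold Rmin, Rmax; destruct Rle_dec; unfold Rabs; repeat destruct Rcase_abs; lra. Qed.

Lemma uniq_side (f f1 f2 : R -> R) p q t M h :
  p <= t <= q -> (t = p \/ t = q) -> q - p <= h -> 0 <= M -> M * h^2 < 1 ->
  (forall z, p <= z <= q -> is_derive f z (f1 z) /\ is_derive f1 z (f2 z)) ->
  (forall z, p <= z <= q -> Rabs (f2 z) <= M * Rabs (f z)) ->
  f t = 0 -> f1 t = 0 -> forall z, p <= z <= q -> f z = 0.
Proof.
  intros Ht Htpq Hh HM HMh Hd HK Hf0 Hf10.
  assert (Hpq : p <= q) by lra.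
  destruct (continuity_ab_maj (fun z => Rabs (f z)) p q Hpq) as [zs [Hmax Hzs]].
  { intros c Hc. change (continuity_pt (comp Rabs f) c). apply continuity_pt_comp.
    apply (deriv_cont _ _ (f1 c)). apply Hd; auto.
    apply Rcontinuity_abs. }
  assert (Hsub : forall z, Rmin t zs <= z <= Rmax t zs -> p <= z <= q)
    by (intros z; apply between_sub; lra).
  pose proof (taylor2 f f1 f2 t zs (M * Rabs (f zs))) as T.
  assert (T' : Rabs (f zs - f t - f1 t * (zs - t)) <= M * Rabs (f zs) * (zs - t) ^ 2).
  { apply T. intros z Hz. apply Hd. apply Hsub; auto.
    intros z Hz. eapply Rle_trans. apply HK. apply Hsub; auto.
    apply Rmult_le_compat_l; auto. all: try (apply Hmax; apply Hsub; auto). }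
  rewrite Hf0, Hf10 in T'. replace (f zs - 0 - 0 * (zs - t)) with (f zs) in T' by ring.
  assert (Hz2 : (zs - t)^2 <= h^2).
  { assert (Rabs (zs - t) <= h) by (unfold Rabs; destruct Rcase_abs; lra).
    replace ((zs - t)^2) with (Rabs (zs - t) * Rabs (zs - t)) by (unfold Rabs; destruct Rcase_abs; ring).
    pose proof (Rabs_pos (zs - t)). nra. }
  assert (Hfz : Rabs (f zs) = 0).
  { pose proof (Rabs_pos (f zs)).
    assert (M * Rabs (f zs) * (zs - t)^2 <= M * Rabs (f zs) * h^2).
    { apply Rmult_le_compat_l; auto. apply Rmult_le_pos; auto. }
    nra. }
  intros z Hz. specialize (Hmax z Hz). simpl in Hmax. rewrite Hfz in Hmax.
  destruct (Req_dec (f z) 0); auto. pose proof (Rabs_pos_lt _ H). lra.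
Qed.

Lemma classify (U U1 U2 Kf : R -> R) a b eps beta Ub M :
  0 < eps -> a <= b ->
  (forall z, a - eps < z < b + eps -> is_derive U z (U1 z) /\ is_derive U1 z (U2 z)) ->
  (forall z, a - eps < z < b + eps -> continuity_pt U2 z) ->
  (forall y, a <= y <= b -> Kf y * (U y - Ub) = beta - U2 y /\ 0 < Kf y /\ Kf y <= M) ->
  forall x, a <= x <= b -> exists del, 0 < del /\ forall y, a <= y <= b -> y <> x -> Rabs (y - x) < del ->
   U y - Ub <> 0 \/ exists r, 0 < r /\ forall z, a <= z <= b -> Rabs (z - y) < r -> U z - Ub = 0.
Proof.
  intros Heps Hab HD HC HK x Hx.
  set (f := fun z => U z - Ub).
  assert (Hdf : forall z, a <= z <= b -> is_derive f z (U1 z) /\ is_derive U1 z (U2 z)).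
  { intros z Hz. destruct (HD z ltac:(lra)) as [H1 H2]. split; auto.
    unfold f. apply (is_derive_eq _ _ (U1 z - 0)); [apply is_derive_minusR; [exact H1| apply is_derive_constR] | ring]. }

  destruct (Req_dec (f x) 0) as [Hfx|Hfx].
  2:{ destruct (eps_of_cont f x (deriv_cont _ _ _ (proj1 (Hdf x Hx))) (Rabs (f x))) as [d [Hd Hd']].
      apply Rabs_pos_lt; auto.
      exists d. split; auto. intros y Hy Hyx Hyd. left. intros E. specialize (Hd' y Hyd).
      fold (f y) in E. rewrite E in Hd'. replace (0 - f x) with (- f x) in Hd' by ring.
      rewrite Rabs_Ropp in Hd'. lra. }
  assert (Hbeta : beta = U2 x).
  { destruct (HK x Hx) as [E _]. fold (f x) in E. rewrite Hfx in E. lra. }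
  destruct (eps_of_cont U2 x (HC x ltac:(lra)) 1 ltac:(lra)) as [d0 [Hd0 Hd0']].
  destruct (Req_dec (U1 x) 0) as [H1x|H1x].
  2:{ set (K2 := Rabs (U2 x) + 1).
      assert (HK2 : 0 < K2) by (unfold K2; pose proof (Rabs_pos (U2 x)); lra).
      assert (HU1 : 0 < Rabs (U1 x)) by (apply Rabs_pos_lt; auto).
      exists (Rmin d0 (Rabs (U1 x) / (2 * K2))). split.
      { unfold Rmin; destruct Rle_dec; auto. apply Rdiv_lt_0_compat; lra. }
      intros y Hy Hyx Hyd. left. intros E.
      assert (Hyd1 : Rabs (y - x) < d0) by (eapply Rlt_le_trans; [exact Hyd| apply Rmin_l]).
      assert (Hyd2 : Rabs (y - x) < Rabs (U1 x) / (2 * K2)) by (eapply Rlt_le_trans; [exact Hyd| apply Rmin_r]).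
      pose proof (taylor2 f U1 U2 x y K2) as T.
      assert (T' : Rabs (f y - f x - U1 x * (y - x)) <= K2 * (y - x)^2).
      { apply T. intros z Hz. apply Hdf. eapply between_sub; [exact Hx|exact Hy|exact Hz].
        intros z Hz. specialize (Hd0' z ltac:(eapply Rle_lt_trans; [apply between_abs; exact Hz| exact Hyd1])).
        unfold K2. revert Hd0'. unfold Rabs; repeat destruct Rcase_abs; lra. }
      fold (f y) in E. rewrite E, Hfx in T'.
      replace (0 - 0 - U1 x * (y - x)) with (- (U1 x * (y - x))) in T' by ring.
      rewrite Rabs_Ropp, Rabs_mult in T'.
      assert (Hd : 0 < Rabs (y - x)) by (apply Rabs_pos_lt; lra).
      rewrite <- (Rsqr_abs (y - x)) in T' at 1 || idtac.
      replace ((y - x)^2) with (Rabs (y - x) * Rabs (y - x)) in T'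
        by (unfold Rabs; destruct Rcase_abs; ring).
      assert (Rabs (U1 x) <= K2 * Rabs (y - x)).
      { apply (Rmult_le_reg_r (Rabs (y - x))); auto. nra. }
      assert (K2 * Rabs (y - x) < Rabs (U1 x) / 2).
      { apply (Rmult_lt_compat_l K2) in Hyd2; auto.
        replace (K2 * (Rabs (U1 x) / (2 * K2))) with (Rabs (U1 x) / 2) in Hyd2 by (field; lra). lra. }
      lra. }
  destruct (Req_dec beta 0) as [Hb0|Hb0].
  -
    assert (HM : 0 <= M) by (destruct (HK x Hx) as [_ [H1 H2]]; lra).
    set (h := / (M + 1)).
    assert (Hh : 0 < h) by (unfold h; apply Rinv_0_lt_compat; lra).
    assert (HMh : M * h^2 < 1).
    { unfold h. replace (M * (/ (M + 1))^2) with (M / ((M+1)*(M+1))) by (field; lra).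
      apply (Rmult_lt_reg_r ((M+1)*(M+1))). nra. unfold Rdiv. rewrite Rmult_assoc, Rinv_l. nra. nra. }
    assert (HK2 : forall z, a <= z <= b -> Rabs (U2 z) <= M * Rabs (f z)).
    { intros z Hz. destruct (HK z Hz) as [E [H1 H2]]. fold (f z) in E.
      replace (U2 z) with (- (Kf z * f z)) by lra. rewrite Rabs_Ropp, Rabs_mult.
      rewrite (Rabs_right (Kf z)) by lra. apply Rmult_le_compat_r. apply Rabs_pos. lra. }
    assert (Hzero : forall z, a <= z <= b -> Rabs (z - x) <= h -> f z = 0).
    { intros z Hz Hzx. destruct (Rle_dec x z).
      - apply (uniq_side f U1 U2 x (Rmin b (x + h)) x M h); auto.
        + unfold Rmin; destruct Rle_dec; lra.
        + unfold Rmin; destruct Rle_dec; lra.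
        + intros w Hw. apply Hdf. unfold Rmin in Hw; destruct Rle_dec in Hw; lra.
        + intros w Hw. apply HK2. unfold Rmin in Hw; destruct Rle_dec in Hw; lra.
        + revert Hzx. unfold Rmin, Rabs; destruct Rle_dec; destruct Rcase_abs; lra.
      - apply (uniq_side f U1 U2 (Rmax a (x - h)) x x M h); auto.
        + unfold Rmax; destruct Rle_dec; lra.
        + unfold Rmax; destruct Rle_dec; lra.
        + intros w Hw. apply Hdf. unfold Rmax in Hw; destruct Rle_dec in Hw; lra.
        + intros w Hw. apply HK2. unfold Rmax in Hw; destruct Rle_dec in Hw; lra.
        + revert Hzx. unfold Rmax, Rabs; destruct Rle_dec; destruct Rcase_abs; lra. }
    exists (h / 2). split. lra. intros y Hy Hyx Hyd. right. exists (h / 2). split. lra.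
    intros z Hz Hzy. apply Hzero; auto. revert Hyd Hzy. unfold Rabs; repeat destruct Rcase_abs; lra.
  -
    assert (Hb : 0 < Rabs beta) by (apply Rabs_pos_lt; auto).
    destruct (eps_of_cont U2 x (HC x ltac:(lra)) (Rabs beta / 4) ltac:(lra)) as [d1 [Hd1 Hd1']].
    exists d1. split; auto. intros y Hy Hyx Hyd. left. intros E.
    set (g := fun z => f z - beta / 2 * ((z - x) * (z - x))).
    set (g1 := fun z => U1 z - beta * (z - x)).
    set (g2 := fun z => U2 z - beta).
    pose proof (taylor2 g g1 g2 x y (Rabs beta / 4)) as T.
    assert (T' : Rabs (g y - g x - g1 x * (y - x)) <= Rabs beta / 4 * (y - x)^2).
    { apply T.
      - intros z Hz. assert (Hz' : a <= z <= b) by (eapply between_sub; [exact Hx|exact Hy|exact Hz]).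
        destruct (Hdf z Hz') as [D1 D2]. split.
        + unfold g, g1. apply (is_derive_eq _ _ (U1 z - beta / 2 * ((1 - 0) * (z - x) + (z - x) * (1 - 0)))).
          apply is_derive_minusR. exact D1. apply is_derive_scalR.
          apply (is_derive_multR (fun t => t - x) (fun t => t - x));
            apply (is_derive_minusR (fun t => t) (fun _ => x)); [apply is_derive_idR| apply is_derive_constR|apply is_derive_idR| apply is_derive_constR].
          field.
        + unfold g1, g2. apply (is_derive_eq _ _ (U2 z - beta * (1 - 0))).
          apply is_derive_minusR. exact D2. apply is_derive_scalR.
          apply (is_derive_minusR (fun t => t) (fun _ => x)); [apply is_derive_idR| apply is_derive_constR]. ring.
      - intros z Hz. unfold g2. apply Rlt_le. rewrite Hbeta at 1. apply Hd1'. eapply Rle_lt_trans; [apply between_abs; exact Hz| exact Hyd]. }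
    unfold g, g1 in T'. fold (f y) in E. rewrite E, Hfx, H1x in T'.
    replace (0 - beta / 2 * ((y - x) * (y - x)) - (0 - beta / 2 * ((x - x) * (x - x))) - (0 - beta * (x - x)) * (y - x))
      with (- (beta / 2 * (y - x)^2)) in T' by ring.
    rewrite Rabs_Ropp, Rabs_mult in T'.
    rewrite (Rabs_right ((y - x)^2)) in T' by (apply Rle_ge; apply pow2_ge_0).
    assert (Hy2 : 0 < (y - x)^2) by (apply pow2_gt_0; lra).
    unfold Rdiv in T'. rewrite Rabs_mult in T'. rewrite (Rabs_right (/2)) in T' by lra.
    nra.
Qed.

Lemma is_derive_fst (g : R -> C) x (l : C) : is_derive g x l -> is_derive (fun t => fst (g t)) x (fst l).
Proof.
  intros H. unfold is_derive in *.
  apply (filterdiff_comp' g fst x (fun y => scal y l) fst H).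
  apply filterdiff_linear. apply is_linear_fst.
Qed.
Lemma is_derive_snd (g : R -> C) x (l : C) : is_derive g x l -> is_derive (fun t => snd (g t)) x (snd l).
Proof.
  intros H. unfold is_derive in *.
  apply (filterdiff_comp' g snd x (fun y => scal y l) snd H).
  apply filterdiff_linear. apply is_linear_snd.
Qed.
Lemma Cmod_sq (z : C) : Cmod z ^ 2 = fst z ^ 2 + snd z ^ 2.
Proof. unfold Cmod. rewrite pow2_sqrt. reflexivity. pose proof (pow2_ge_0 (fst z)); pose proof (pow2_ge_0 (snd z)); lra. Qed.

Lemma cpt_plus (f g : R -> R) x : continuity_pt f x -> continuity_pt g x -> continuity_pt (fun y => f y + g y) x.
Proof. apply continuity_pt_plus. Qed.
Lemma cpt_minus (f g : R -> R) x : continuity_pt f x -> continuity_pt g x -> continuity_pt (fun y => f y - g y) x.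
Proof. apply continuity_pt_minus. Qed.
Lemma cpt_mult (f g : R -> R) x : continuity_pt f x -> continuity_pt g x -> continuity_pt (fun y => f y * g y) x.
Proof. apply continuity_pt_mult. Qed.
Lemma cpt_const (k x : R) : continuity_pt (fun _ => k) x.
Proof. apply continuity_pt_const. intros ? ?; reflexivity. Qed.
Lemma cpt_id (x : R) : continuity_pt (fun y => y) x.
Proof. apply derivable_continuous_pt. apply derivable_pt_id. Qed.
Lemma cpt_pow2 (f : R -> R) x : continuity_pt f x -> continuity_pt (fun y => f y ^ 2) x.
Proof. intros H. simpl. apply (cpt_mult f (fun y => f y * 1)); auto. apply (cpt_mult f (fun _ => 1)); auto. apply cpt_const. Qed.
Lemma cpt_div (f g : R -> R) x : continuity_pt f x -> continuity_pt g x -> g x <> 0 -> continuity_pt (fun y => f y / g y) x.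
Proof. apply continuity_pt_div. Qed.
Lemma cpt_clp a b (g : R -> R) x : a <= b -> (forall z, a <= z <= b -> continuity_pt g z) ->
  continuity_pt (fun y => g (clp a b y)) x.
Proof.
  intros Hab H. apply clp_cont; auto. intros y Hy eps He.
  destruct (eps_of_cont g y (H y Hy) eps He) as [d [Hd H']]. exists d; split; auto.
Qed.

Ltac cpt := repeat first [ apply cpt_plus | apply cpt_minus | apply cpt_mult | apply cpt_pow2 | apply cpt_const | apply cpt_id ].

Lemma cpt_ext (f g : R -> R) x : (forall z, f z = g z) -> continuity_pt g x -> continuity_pt f x.
Proof.
  intros E H. apply cont_of_eps. intros e He. destruct (eps_of_cont g x H e He) as [d [Hd H']].
  exists d; split; auto. intros z Hz. rewrite !E. auto.
Qed.

Lemma cpt_opp (f : R -> R) x : continuity_pt f x -> continuity_pt (fun y => - f y) x.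
Proof. apply continuity_pt_opp. Qed.

Ltac cpt2 := repeat first [ match goal with H : forall x, continuity_pt ?f x |- continuity_pt ?f _ => apply H end
  | apply cpt_minus | apply cpt_plus | apply cpt_opp | apply cpt_mult | apply cpt_pow2 | apply cpt_const | apply cpt_id ].

Lemma deriv_prim (f : R -> R) (k m : R) : (forall x, continuity_pt f x) ->
  forall y, is_derive (fun t => k + RInt f m t) y (f y).
Proof.
  intros Hc y. apply (is_derive_eq _ _ (0 + f y)); [|ring].
  apply is_derive_plusR. apply is_derive_constR.
  apply (is_derive_RInt f (RInt f m) m y).
  - apply filter_forall. intros b0. apply (RInt_correct f m b0). apply ex_RInt_continuous.
    intros; apply continuity_pt_filterlim; auto.
  - apply continuity_pt_filterlim; auto.
Qed.

Lemma prim_at (f : R -> R) (k m : R) : k + RInt f m m = k.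
Proof. rewrite RInt_point. unfold zero; simpl. ring. Qed.

Lemma exRInt_cont (f : R -> R) p q : (forall x, continuity_pt f x) -> ex_RInt f p q.
Proof. intros Hc. apply (@ex_RInt_continuous R_CompleteNormedModule). intros; apply continuity_pt_filterlim; auto. Qed.

Lemma cpt_comp (f g : R -> R) x : continuity_pt g x -> continuity_pt f (g x) -> continuity_pt (fun z => f (g z)) x.
Proof. intros H1 H2. apply (continuity_pt_comp g f x H1 H2). Qed.

Lemma RInt_plusR (f g : R -> R) a b : ex_RInt f a b -> ex_RInt g a b ->
  RInt (fun x => f x + g x) a b = RInt f a b + RInt g a b.
Proof. intros H1 H2. apply (RInt_plus f g a b H1 H2). Qed.
Lemma RInt_scalR (f : R -> R) k a b : ex_RInt f a b -> RInt (fun x => k * f x) a b = k * RInt f a b.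
Proof. intros H1. apply (RInt_scal f a b k H1). Qed.
Lemma nonneg_frac K S N D : 0 <= K -> 0 <= S -> 0 <= N -> 0 < D -> 0 <= K * S * N / D.
Proof. intros. unfold Rdiv. apply Rmult_le_pos. repeat apply Rmult_le_pos; auto. apply Rlt_le, Rinv_0_lt_compat; auto. Qed.

Lemma ode_real (p q u v al bb Uy cr ci : R) : 0 < ci ->
 (- (p,q) + RtoC al * (u,v) - (RtoC bb / (RtoC Uy - (cr,ci))) * (u,v))%C = 0%C ->
 p = al * u - bb / ((Uy - cr)^2 + ci^2) * ((Uy - cr) * u - ci * v) /\
 q = al * v - bb / ((Uy - cr)^2 + ci^2) * ((Uy - cr) * v + ci * u).
Proof.
intros Hci H.
assert (HD : (Uy - cr)^2 + ci^2 <> 0) by (apply Rgt_not_eq; pose proof (pow2_ge_0 (Uy - cr)); nra).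
unfold Cminus, Cplus, Cmult, Copp, Cdiv, Cinv, RtoC in H. simpl in H.
pose proof (f_equal fst H) as H1. pose proof (f_equal snd H) as H2. simpl in H1, H2. clear H.
replace ((Uy + - cr) * ((Uy + - cr) * 1) + (0 + - ci) * ((0 + - ci) * 1)) with ((Uy - cr)^2 + ci^2) in H1, H2 by ring.
split.
- match type of H1 with ?L = 0 => 
    assert (E : p - (al * u - bb / ((Uy - cr)^2 + ci^2) * ((Uy - cr) * u - ci * v)) = - L) by (field; auto) end.
  lra.
- match type of H2 with ?L = 0 => 
    assert (E : q - (al * v - bb / ((Uy - cr)^2 + ci^2) * ((Uy - cr) * v + ci * u)) = - L) by (field; auto) end.
  lra.
Qed.

Lemma ode_realC (w z c : C) (al bb Uy : R) : 0 < snd c ->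
 (- w + RtoC al * z - (RtoC bb / (RtoC Uy - c)) * z)%C = 0%C ->
 fst w = al * fst z - bb / ((Uy - fst c)^2 + snd c^2) * ((Uy - fst c) * fst z - snd c * snd z) /\
 snd w = al * snd z - bb / ((Uy - fst c)^2 + snd c^2) * ((Uy - fst c) * snd z + snd c * fst z).
Proof. destruct w, z, c. simpl. apply ode_real. Qed.

Theorem lemma2p4
  (U : R -> R) (y1 y2 : R) (Hy : y1 < y2) (HU : classKplus U y1 y2)
  (beta : R)
  (Hbeta : exists ya yb : R, y1 <= ya <= y2 /\ y1 <= yb <= y2 /\
             Derive_n U 2 ya < beta < Derive_n U 2 yb)
  (Ub : R) (HUb : Ran U y1 y2 Ub) (HK : Kbeta_pos_bdd U y1 y2 beta Ub)
  (alpha : R) (Halpha : 0 < alpha)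
  (c : C) (Hc : 0 < Im c)
  (phi dphi d2phi : R -> C)
  (Hcont : forall y : R, y1 <= y <= y2 ->
     filterlim phi (within (fun z => y1 <= z <= y2) (locally y)) (locally (phi y)))
  (Hd1 : forall y : R, y1 < y < y2 -> is_derive phi y (dphi y))
  (Hd2 : forall y : R, y1 < y < y2 -> is_derive dphi y (d2phi y))
  (Heq : forall y : R, y1 < y < y2 ->
     (- d2phi y + RtoC (alpha ^ 2) * phi y
      - (RtoC (beta - Derive_n U 2 y) / (RtoC (U y) - c)) * phi y)%C = 0%C)
  (Hbc1 : phi y1 = 0%C) (Hbc2 : phi y2 = 0%C) :
  RInt (fun y => Cmod (dphi y) ^ 2 + alpha ^ 2 * Cmod (phi y) ^ 2) y1 y2
    <= RInt (fun y => Kbeta U beta Ub y * Cmod (phi y) ^ 2) y1 y2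
  /\
  RInt (fun y => Cmod (d2phi y) ^ 2 + 2 * alpha ^ 2 * Cmod (dphi y) ^ 2
                 + alpha ^ 4 * Cmod (phi y) ^ 2) y1 y2
    <= Linf_on (Kbeta U beta Ub) y1 y2
       * RInt (fun y => Kbeta U beta Ub y * Cmod (phi y) ^ 2) y1 y2.
Proof.
  destruct HU as [[eps [Heps HC3]] _].
  destruct HK as [Kf [M HKf]].
  assert (Hyy : y1 <= y2) by lra.
  assert (HDU : forall z, y1 - eps < z < y2 + eps ->
     is_derive U z (Derive_n U 1 z) /\ is_derive (Derive_n U 1) z (Derive_n U 2 z)
     /\ is_derive (Derive_n U 2) z (Derive_n U 3 z)).
  { intros z Hz. destruct (HC3 z Hz) as [Hk _].
    split; [|split].
    - exact (Derive_correct U z (Hk 1%nat ltac:(lia))).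
    - exact (Derive_correct _ z (Hk 2%nat ltac:(lia))).
    - exact (Derive_correct _ z (Hk 3%nat ltac:(lia))). }
  assert (HUc : forall z, y1 <= z <= y2 -> continuity_pt U z).
  { intros z Hz. apply (deriv_cont _ _ (Derive_n U 1 z)). apply HDU; lra. }
  assert (HU2c : forall z, y1 - eps < z < y2 + eps -> continuity_pt (Derive_n U 2) z).
  { intros z Hz. apply (deriv_cont _ _ (Derive_n U 3 z)). apply HDU; lra. }
  assert (HKb1 : forall y, y1 <= y <= y2 -> Kbeta U beta Ub y * (U y - Ub) = beta - Derive_n U 2 y).
  { intros y Hy'. destruct (HKf y Hy') as [E _]. unfold Kbeta.
    destruct (Req_dec (U y - Ub) 0) as [Z|Z].
    - rewrite Z in *. rewrite Rmult_0_r in *. lra.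
    - field; auto. }
  assert (HKb2 : forall y, y1 <= y <= y2 -> 0 <= Kbeta U beta Ub y <= M).
  { intros y Hy'. destruct (HKf y Hy') as [E [K1 K2]]. unfold Kbeta.
    destruct (Req_dec (U y - Ub) 0) as [Z|Z].
    - rewrite Z. unfold Rdiv. rewrite Rinv_0, Rmult_0_r. lra.
    - replace ((beta - Derive_n U 2 y) / (U y - Ub)) with (Kf y). lra.
      rewrite <- E. field; auto. }
  assert (HKb0 : forall y, U y - Ub = 0 -> Kbeta U beta Ub y = 0).
  { intros y Z. unfold Kbeta. rewrite Z. unfold Rdiv. rewrite Rinv_0. ring. }
  set (L := Linf_on (Kbeta U beta Ub) y1 y2).
  assert (HL : 0 <= L /\ forall y, y1 <= y <= y2 -> Kbeta U beta Ub y <= L).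
  { unfold L, Linf_on.
    destruct (Lub_Rbar_correct (fun v => exists y, y1 <= y <= y2 /\ v = Rabs (Kbeta U beta Ub y))) as [Hub Hlub].
    destruct (Lub_Rbar (fun v => exists y, y1 <= y <= y2 /\ v = Rabs (Kbeta U beta Ub y))) as [l| |] eqn:El.
    - simpl. assert (Hk : forall y, y1 <= y <= y2 -> Kbeta U beta Ub y <= l).
      { intros y Hy'. specialize (Hub (Rabs (Kbeta U beta Ub y)) (ex_intro _ y (conj Hy' eq_refl))).
        simpl in Hub. pose proof (Rle_abs (Kbeta U beta Ub y)). lra. }
      split; auto. pose proof (HKb2 y1 ltac:(lra)). pose proof (Hk y1 ltac:(lra)). lra.
    - exfalso. specialize (Hlub (Finite M)). simpl in Hlub. apply Hlub.
      intros v [y [Hy' ->]]. simpl. pose proof (HKb2 y Hy'). rewrite Rabs_right; lra.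
    - exfalso. specialize (Hub (Rabs (Kbeta U beta Ub y1)) (ex_intro _ y1 (conj (conj (Rle_refl y1) Hyy) eq_refl))).
      simpl in Hub. exact Hub. }
  destruct c as [cr ci]. simpl in Hc.
  set (U2 := Derive_n U 2) in *.
  set (u := fun t => fst (phi t)). set (v := fun t => snd (phi t)).
  set (du := fun t => fst (dphi t)). set (dv := fun t => snd (dphi t)).
  set (d2u := fun t => fst (d2phi t)). set (d2v := fun t => snd (d2phi t)).
  assert (Hdu : forall y, y1 < y < y2 -> is_derive u y (du y) /\ is_derive v y (dv y)
     /\ is_derive du y (d2u y) /\ is_derive dv y (d2v y)).
  { intros y Hy'. split; [|split; [|split]].
    - apply (is_derive_fst phi y (dphi y)); auto.
    - apply (is_derive_snd phi y (dphi y)); auto.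
    - apply (is_derive_fst dphi y (d2phi y)); auto.
    - apply (is_derive_snd dphi y (d2phi y)); auto. }
  set (w := fun t => (beta - U2 t) / ((U t - cr)^2 + ci^2)).
  set (R2u := fun t => alpha^2 * u t - w t * ((U t - cr) * u t - ci * v t)).
  set (R2v := fun t => alpha^2 * v t - w t * ((U t - cr) * v t + ci * u t)).
  assert (Hode : forall y, y1 < y < y2 -> d2u y = R2u y /\ d2v y = R2v y).
  { intros y Hy'. destruct (ode_realC (d2phi y) (phi y) (cr, ci) (alpha^2) (beta - U2 y) (U y) Hc (Heq y Hy')) as [E1 E2].
    simpl in E1, E2. unfold d2u, d2v, R2u, R2v, w, u, v. rewrite E1, E2. split; reflexivity. }
  assert (Hwc : forall eps0, 0 < eps0 -> forall y, y1 <= y <= y2 -> exists del, 0 < del /\ forall z, y1 <= z <= y2 ->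
     Rabs (z - y) < del -> Rabs (u z - u y) < eps0 /\ Rabs (v z - v y) < eps0).
  { intros e He y Hy'. pose proof (Hcont y Hy') as Hc'.
    apply filterlim_locally with (eps := mkposreal e He) in Hc'.
    destruct Hc' as [del Hd]. exists del. split. apply cond_pos. intros z Dz Hz.
    specialize (Hd z Hz Dz). destruct Hd as [H1 H2]. split. exact H1. exact H2. }
  assert (Hu0 : u y1 = 0 /\ v y1 = 0 /\ u y2 = 0 /\ v y2 = 0).
  { unfold u, v. rewrite Hbc1, Hbc2. simpl. auto. }
  set (cl := clp y1 y2).
  assert (HclC : forall x, continuity_pt cl x).
  { intros x. apply cont_of_eps. intros e He. exists e. split; auto. intros z Hz.
    eapply Rle_lt_trans. apply clp_lip; lra. exact Hz. }
  assert (HuC : forall x, continuity_pt (fun z => u (cl z)) x).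
  { apply clp_cont; auto. intros y Hy' e He. destruct (Hwc e He y Hy') as [d [Hd H']].
    exists d. split; auto. intros z Hz Hzy. apply H'; auto. }
  assert (HvC : forall x, continuity_pt (fun z => v (cl z)) x).
  { apply clp_cont; auto. intros y Hy' e He. destruct (Hwc e He y Hy') as [d [Hd H']].
    exists d. split; auto. intros z Hz Hzy. apply H'; auto. }
  assert (HUC : forall x, continuity_pt (fun z => U (cl z)) x).
  { intros x. apply cpt_clp; auto. }
  assert (HU2C : forall x, continuity_pt (fun z => U2 (cl z)) x).
  { intros x. apply cpt_clp; auto. intros z Hz. apply HU2c. lra. }
  assert (HD0 : forall t, 0 < (t - cr)^2 + ci^2) by (intros t; pose proof (pow2_ge_0 (t - cr)); nra).
  assert (HwC : forall x, continuity_pt (fun z => w (cl z)) x).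
  { intros x. unfold w. apply (cpt_div (fun z => beta - U2 (cl z)) (fun z => (U (cl z) - cr)^2 + ci^2)).
    - apply cpt_minus; [apply cpt_const| apply HU2C].
    - apply cpt_plus; [apply cpt_pow2; apply cpt_minus; [apply HUC | apply cpt_const] | apply cpt_const].
    - apply Rgt_not_eq, HD0. }
  assert (Hw : forall t, w t = (beta - U2 t) / ((U t - cr)^2 + ci^2)) by reflexivity.
  assert (HR2u : forall t, R2u t = alpha^2 * u t - w t * ((U t - cr) * u t - ci * v t)) by reflexivity.
  assert (HR2v : forall t, R2v t = alpha^2 * v t - w t * ((U t - cr) * v t + ci * u t)) by reflexivity.
  clearbody R2u R2v w.
  set (Fu := fun z => R2u (cl z)). set (Fv := fun z => R2v (cl z)).
  assert (HFuC : forall x, continuity_pt Fu x).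
  { intros x. apply (cpt_ext _ (fun z => alpha^2 * u (cl z) - w (cl z) * ((U (cl z) - cr) * u (cl z) - ci * v (cl z)))).
    intros z; unfold Fu; apply HR2u. cpt2. }
  assert (HFvC : forall x, continuity_pt Fv x).
  { intros x. apply (cpt_ext _ (fun z => alpha^2 * v (cl z) - w (cl z) * ((U (cl z) - cr) * v (cl z) + ci * u (cl z)))).
    intros z; unfold Fv; apply HR2v. cpt2. }
  set (m := (y1 + y2) / 2).
  assert (Hm : y1 < m < y2) by (unfold m; lra).
  set (P1 := fun t => du m + RInt Fu m t). set (P2 := fun t => dv m + RInt Fv m t).
  assert (HP1d : forall y, is_derive P1 y (Fu y)) by (apply deriv_prim; auto).
  assert (HP2d : forall y, is_derive P2 y (Fv y)) by (apply deriv_prim; auto).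
  assert (HP1m : P1 m = du m) by apply prim_at.
  assert (HP2m : P2 m = dv m) by apply prim_at.
  assert (HP1C : forall x, continuity_pt P1 x) by (intros x; apply (deriv_cont _ _ _ (HP1d x))).
  assert (HP2C : forall x, continuity_pt P2 x) by (intros x; apply (deriv_cont _ _ _ (HP2d x))).
  clearbody P1 P2.
  set (Q1 := fun t => u m + RInt P1 m t). set (Q2 := fun t => v m + RInt P2 m t).
  assert (HQ1d : forall y, is_derive Q1 y (P1 y)) by (apply deriv_prim; auto).
  assert (HQ2d : forall y, is_derive Q2 y (P2 y)) by (apply deriv_prim; auto).
  assert (HQ1m : Q1 m = u m) by apply prim_at.
  assert (HQ2m : Q2 m = v m) by apply prim_at.
  assert (HQ1C : forall x, continuity_pt Q1 x) by (intros x; apply (deriv_cont _ _ _ (HQ1d x))).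
  assert (HQ2C : forall x, continuity_pt Q2 x) by (intros x; apply (deriv_cont _ _ _ (HQ2d x))).
  clearbody Q1 Q2.
  assert (HPag : forall y, y1 < y < y2 -> du y = P1 y /\ dv y = P2 y).
  { intros y Hy'. split.
    - assert (E := const_open (fun t => du t - P1 t) y1 y2 m Hm). simpl in E.
      rewrite HP1m in E. replace (du m - du m) with 0 in E by ring.
      enough (du y - P1 y = 0) by lra. apply E; auto.
      intros z Hz. apply (is_derive_eq _ _ (d2u z - Fu z)). apply is_derive_minusR. apply Hdu; auto. apply HP1d.
      unfold Fu, cl. rewrite clp_id by lra. rewrite (proj1 (Hode z Hz)). ring.
    - assert (E := const_open (fun t => dv t - P2 t) y1 y2 m Hm). simpl in E.
      rewrite HP2m in E. replace (dv m - dv m) with 0 in E by ring.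
      enough (dv y - P2 y = 0) by lra. apply E; auto.
      intros z Hz. apply (is_derive_eq _ _ (d2v z - Fv z)). apply is_derive_minusR. apply Hdu; auto. apply HP2d.
      unfold Fv, cl. rewrite clp_id by lra. rewrite (proj2 (Hode z Hz)). ring. }
  assert (HQag : forall y, y1 < y < y2 -> u y = Q1 y /\ v y = Q2 y).
  { intros y Hy'. split.
    - assert (E := const_open (fun t => u t - Q1 t) y1 y2 m Hm). simpl in E.
      rewrite HQ1m in E. replace (u m - u m) with 0 in E by ring.
      enough (u y - Q1 y = 0) by lra. apply E; auto.
      intros z Hz. apply (is_derive_eq _ _ (du z - P1 z)). apply is_derive_minusR. apply Hdu; auto. apply HQ1d.
      rewrite (proj1 (HPag z Hz)). ring.
    - assert (E := const_open (fun t => v t - Q2 t) y1 y2 m Hm). simpl in E.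
      rewrite HQ2m in E. replace (v m - v m) with 0 in E by ring.
      enough (v y - Q2 y = 0) by lra. apply E; auto.
      intros z Hz. apply (is_derive_eq _ _ (dv z - P2 z)). apply is_derive_minusR. apply Hdu; auto. apply HQ2d.
      rewrite (proj2 (HPag z Hz)). ring. }
  assert (HQend : Q1 y1 = 0 /\ Q2 y1 = 0 /\ Q1 y2 = 0 /\ Q2 y2 = 0).
  { destruct Hu0 as [A1 [A2 [A3 A4]]]. split; [|split; [|split]].
    - rewrite <- A1. apply (endpt_l Q1 u y1 y2); auto.
      + intros e He. destruct (Hwc e He y1 ltac:(lra)) as [d [Hd H']]. exists d; split; auto.
        intros z Hz Hz'. apply H'; auto.
      + intros z Hz. symmetry. apply HQag; auto.
    - rewrite <- A2. apply (endpt_l Q2 v y1 y2); auto.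
      + intros e He. destruct (Hwc e He y1 ltac:(lra)) as [d [Hd H']]. exists d; split; auto.
        intros z Hz Hz'. apply H'; auto.
      + intros z Hz. symmetry. apply HQag; auto.
    - rewrite <- A3. apply (endpt_r Q1 u y1 y2); auto.
      + intros e He. destruct (Hwc e He y2 ltac:(lra)) as [d [Hd H']]. exists d; split; auto.
        intros z Hz Hz'. apply H'; auto.
      + intros z Hz. symmetry. apply HQag; auto.
    - rewrite <- A4. apply (endpt_r Q2 v y1 y2); auto.
      + intros e He. destruct (Hwc e He y2 ltac:(lra)) as [d [Hd H']]. exists d; split; auto.
        intros z Hz Hz'. apply H'; auto.
      + intros z Hz. symmetry. apply HQag; auto. }
  assert (HJ : forall lam mu, is_RInt (fun y => lam * (P1 y ^ 2 + P2 y ^ 2 + Q1 y * Fu y + Q2 y * Fv y)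
                                  + mu * (Q1 y * Fv y - Q2 y * Fu y)) y1 y2 0).
  { intros lam mu.
    set (G := fun y => lam * (Q1 y * P1 y + Q2 y * P2 y) + mu * (Q1 y * P2 y - Q2 y * P1 y)).
    assert (HG : G y2 - G y1 = 0).
    { unfold G. destruct HQend as [A1 [A2 [A3 A4]]]. rewrite A1, A2, A3, A4. ring. }
    rewrite <- HG.
    apply (is_RInt_derive G).
    - intros x _. unfold G.
      apply (is_derive_eq _ _ (lam * ((P1 x * P1 x + Q1 x * Fu x) + (P2 x * P2 x + Q2 x * Fv x))
                              + mu * ((P1 x * P2 x + Q1 x * Fv x) - (P2 x * P1 x + Q2 x * Fu x)))); [|ring].
      apply is_derive_plusR; apply is_derive_scalR.
      + apply is_derive_plusR; apply is_derive_multR; auto.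
      + apply is_derive_minusR; apply is_derive_multR; auto.
    - intros x _. apply continuity_pt_filterlim. cpt2. }
  set (S := fun y => Q1 y ^ 2 + Q2 y ^ 2).
  assert (HSC : forall x, continuity_pt S x) by (intros x; unfold S; cpt2).
  assert (HS0 : forall y, 0 <= S y) by (intros y; unfold S; pose proof (pow2_ge_0 (Q1 y)); pose proof (pow2_ge_0 (Q2 y)); lra).
  assert (HSdef : forall y, S y = Q1 y ^ 2 + Q2 y ^ 2) by reflexivity.
  clearbody S.
  set (Kc := fun y => Kbeta U beta Ub (cl y)).
  assert (HexK : ex_RInt (fun y => Kc y * S y) y1 y2).
  { destruct (continuity_ab_maj S y1 y2 Hyy (fun c _ => HSC c)) as [zs [Hzs _]].
    apply RI_loc_glob. exact Hyy. intros x Hx.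
    assert (HD12 : forall z, y1 - eps < z < y2 + eps -> is_derive U z (Derive_n U 1 z) /\ is_derive (Derive_n U 1) z (U2 z)).
    { intros z Hz. split. exact (proj1 (HDU z Hz)). exact (proj1 (proj2 (HDU z Hz))). }
    pose proof (classify U (Derive_n U 1) U2 Kf y1 y2 eps beta Ub M Heps Hyy HD12 HU2c HKf x Hx) as [del [Hdel Hcl]].
    exists del. split. exact Hdel. intros p q Hp Hq Hpq.
    apply ex_RInt_Reals_1. apply (RI_point _ p q x (M * S zs)).
    - lra.
    - intros y Hy'. unfold Kc. assert (Hcy : y1 <= cl y <= y2) by (apply clp_in; lra).
      pose proof (HKb2 (cl y) Hcy). pose proof (HS0 y). pose proof (Hzs y ltac:(lra)).
      rewrite Rabs_mult, !Rabs_right by lra. apply Rmult_le_compat; lra.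
    - intros y Hy' Hyx.
      assert (Hyc : y1 <= y <= y2) by lra.
      assert (Hclyy : cl y = y) by (apply clp_id; lra).
      destruct (Hcl y Hyc Hyx) as [Hnz | [r [Hr Hz]]].
      { revert Hp Hq Hpq Hy'. unfold Rabs; destruct Rcase_abs; lra. }
      + apply cpt_mult; [|apply HSC]. unfold Kc. apply cpt_comp. apply HclC.
        rewrite Hclyy. unfold Kbeta. apply cpt_div.
        * apply cpt_minus. apply cpt_const. apply HU2c. lra.
        * apply cpt_minus. apply HUc. lra. apply cpt_const.
        * exact Hnz.
      + apply cont_of_eps. intros e He. exists r. split; auto. intros z Hzr.
        assert (HK0 : forall t, Rabs (t - y) < r -> Kc t = 0).
        { intros t Ht. unfold Kc. apply HKb0. apply Hz. apply clp_in; lra.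
          rewrite <- Hclyy. eapply Rle_lt_trans. apply clp_lip. lra. exact Ht. }
        rewrite (HK0 z Hzr), (HK0 y). replace (0 * S z - 0 * S y) with 0 by ring. rewrite Rabs_R0. lra.
        unfold Rminus; rewrite Rplus_opp_r, Rabs_R0; lra. }
  assert (HJex : forall lam mu, ex_RInt (fun y => lam * (P1 y ^ 2 + P2 y ^ 2 + Q1 y * Fu y + Q2 y * Fv y)
                                  + mu * (Q1 y * Fv y - Q2 y * Fu y)) y1 y2)
    by (intros lam mu; eexists; apply HJ).
  assert (HJ0 : forall lam mu, RInt (fun y => lam * (P1 y ^ 2 + P2 y ^ 2 + Q1 y * Fu y + Q2 y * Fv y)
                                  + mu * (Q1 y * Fv y - Q2 y * Fu y)) y1 y2 = 0)
    by (intros lam mu; apply is_RInt_unique; apply HJ).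
  set (X := fun y => w (cl y) * (U (cl y) - 2 * cr + Ub) * S y).
  assert (HXC : forall x, continuity_pt X x) by (intros x; unfold X; cpt2).
  assert (HXex : ex_RInt X y1 y2) by (apply exRInt_cont; exact HXC).
  assert (HXdef : forall y, X y = w (cl y) * (U (cl y) - 2 * cr + Ub) * S y) by reflexivity.
  clearbody X.
  set (k1 := (Ub - cr) / ci).
  assert (Hci : ci <> 0) by lra.
  assert (HRmin : Rmin y1 y2 = y1) by (apply Rmin_left; lra).
  assert (HRmax : Rmax y1 y2 = y2) by (apply Rmax_right; lra).
  assert (Hpt : forall y, y1 < y < y2 ->
     cl y = y /\ Fu y = R2u y /\ Fv y = R2v y).
  { intros y Hy'. assert (E : cl y = y) by (apply clp_id; lra).
    unfold Fu, Fv. rewrite E. auto. }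
  assert (HXle : RInt X y1 y2 <= RInt (fun y => Kc y * S y) y1 y2).
  { apply RInt_le; auto. intros y Hy'. destruct (Hpt y Hy') as [E _].
    rewrite HXdef. unfold Kc. rewrite E. rewrite Hw. rewrite <- (HKb1 y) by lra.
    set (Kb := Kbeta U beta Ub y). pose proof (HD0 (U y)) as HD. pose proof (HKb2 y ltac:(lra)) as HK.
    assert (Eq : Kb * S y - Kb * (U y - Ub) / ((U y - cr) ^ 2 + ci ^ 2) * (U y - 2 * cr + Ub) * S y
               = Kb * S y * ((cr - Ub)^2 + ci^2) / ((U y - cr) ^ 2 + ci ^ 2)) by (field; lra).
    pose proof (nonneg_frac Kb (S y) ((cr - Ub)^2 + ci^2) ((U y - cr) ^ 2 + ci ^ 2) (proj1 HK) (HS0 y)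
      ltac:(pose proof (pow2_ge_0 (cr - Ub)); pose proof (pow2_ge_0 ci); lra) HD). lra. }
  assert (HRHS : RInt (fun y => Kbeta U beta Ub y * Cmod (phi y) ^ 2) y1 y2 = RInt (fun y => Kc y * S y) y1 y2).
  { apply RInt_ext. rewrite HRmin, HRmax. intros y Hy'. match goal with |- ?A = ?B => change (@eq R A B) end. destruct (Hpt y Hy') as [E _].
    unfold Kc. rewrite E, Cmod_sq, HSdef. destruct (HQag y Hy') as [E1 E2].
    change (fst (phi y)) with (u y). change (snd (phi y)) with (v y). rewrite E1, E2. reflexivity. }
  rewrite HRHS. split.
  - assert (HL1 : RInt (fun y => Cmod (dphi y) ^ 2 + alpha ^ 2 * Cmod (phi y) ^ 2) y1 y2
       = RInt (fun y => X y + (1 * (P1 y ^ 2 + P2 y ^ 2 + Q1 y * Fu y + Q2 y * Fv y)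
                                  + k1 * (Q1 y * Fv y - Q2 y * Fu y))) y1 y2).
    { apply RInt_ext. rewrite HRmin, HRmax. intros y Hy'. match goal with |- ?A = ?B => change (@eq R A B) end. destruct (Hpt y Hy') as [E [E3 E4]].
      rewrite !Cmod_sq, HXdef, E, E3, E4, HR2u, HR2v, HSdef.
      destruct (HQag y Hy') as [E1 E2]. destruct (HPag y Hy') as [E5 E6].
      change (fst (phi y)) with (u y). change (snd (phi y)) with (v y).
      change (fst (dphi y)) with (du y). change (snd (dphi y)) with (dv y).
      rewrite E1, E2, E5, E6. unfold k1. field. auto. }
    rewrite HL1, RInt_plusR, HJ0; auto. lra.
  - assert (HL2 : RInt (fun y => Cmod (d2phi y) ^ 2 + 2 * alpha ^ 2 * Cmod (dphi y) ^ 2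
                 + alpha ^ 4 * Cmod (phi y) ^ 2) y1 y2
       = RInt (fun y => Fu y ^ 2 + Fv y ^ 2 + 2 * alpha ^ 2 * (P1 y ^ 2 + P2 y ^ 2) + alpha ^ 4 * S y) y1 y2).
    { apply RInt_ext. rewrite HRmin, HRmax. intros y Hy'. match goal with |- ?A = ?B => change (@eq R A B) end. destruct (Hpt y Hy') as [E [E3 E4]].
      rewrite !Cmod_sq, HSdef, E3, E4.
      destruct (HQag y Hy') as [E1 E2]. destruct (HPag y Hy') as [E5 E6]. destruct (Hode y Hy') as [E7 E8].
      change (fst (phi y)) with (u y). change (snd (phi y)) with (v y).
      change (fst (dphi y)) with (du y). change (snd (dphi y)) with (dv y).
      change (fst (d2phi y)) with (d2u y). change (snd (d2phi y)) with (d2v y).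
      rewrite E1, E2, E5, E6, E7, E8. reflexivity. }
    rewrite HL2.
    destruct HL as [HL0 HLk].
    set (mu := 2 * L * k1).
    apply Rle_trans with (RInt (fun y => L * X y + (2 * alpha^2 * (P1 y ^ 2 + P2 y ^ 2 + Q1 y * Fu y + Q2 y * Fv y)
                                  + mu * (Q1 y * Fv y - Q2 y * Fu y))) y1 y2).
    + apply RInt_le.
      * lra.
      * apply exRInt_cont. intros x. cpt2.
      * apply exRInt_cont. intros x. cpt2.
      * intros y Hy'. destruct (Hpt y Hy') as [E [E3 E4]].
        rewrite HXdef, E, E3, E4, HR2u, HR2v, HSdef, Hw.
        destruct (HQag y Hy') as [E1 E2]. rewrite <- E1, <- E2.
        rewrite <- (HKb1 y) by lra.
        pose proof (HKb2 y ltac:(lra)) as HK. pose proof (HLk y ltac:(lra)) as HKL.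
        set (Kb := Kbeta U beta Ub y) in *. pose proof (HD0 (U y)) as HD.
        match goal with |- ?A <= ?B =>
          assert (Eq : B - A = Kb * (u y ^ 2 + v y ^ 2) * ((L - Kb) * (U y - Ub)^2) / ((U y - cr) ^ 2 + ci ^ 2))
          by (unfold mu, k1; field; lra) end.
        assert (N1 : 0 <= u y ^ 2 + v y ^ 2) by (pose proof (pow2_ge_0 (u y)); pose proof (pow2_ge_0 (v y)); lra).
        assert (N2 : 0 <= (L - Kb) * (U y - Ub)^2) by (apply Rmult_le_pos; [lra| apply pow2_ge_0]).
        assert (N0 : 0 <= Kb) by lra.
        pose proof (nonneg_frac Kb (u y ^ 2 + v y ^ 2) ((L - Kb) * (U y - Ub)^2) ((U y - cr) ^ 2 + ci ^ 2)
           N0 N1 N2 HD). lra.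
    + rewrite RInt_plusR, HJ0, RInt_scalR; auto.
      * rewrite Rplus_0_r. apply Rmult_le_compat_l; auto.
      * apply exRInt_cont. intros x. cpt2.
Qed.
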